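(* Let $H$ be a real Hilbert space and $\{C_\alpha\}_{\alpha\in\Omega}$ ($|\Omega|\ge2$) a family of closed convex subsets of $H$ with nonempty intersection $C=\bigcap_{\alpha\in\Omega}C_\alpha$. Let $\{t_n\}\subset[0,1]$ be such that there exist $\delta>0$ and $K\in\mathbb N$ with the property that for every $n\in\mathbb N$ at least one of $t_n,t_{n+1},\dots,t_{n+K}$ is greater than $\delta$. Then for every starting element $x_0\in H$, every sequence $\{x_n\}$ of remote projections onto $\{C_\alpha\}$ with weakness parameters $\{t_n\}$ converges weakly to some point of $C$.
   Context: $P_\alpha$ denotes the metric projection onto $C_\alpha$. A sequence of remote projections with weakness parameters $t_n\in[0,1]$ starting at $x_0$ is defined by $x_{n+1}=P_{\alpha(n)}x_n$, where $\alpha(n)\in\Omega$ is any index with $\mathrm{dist}(x_n,C_{\alpha(n)})\ge t_n\sup_{\alpha}\mathrm{dist}(x_n,C_\alpha)$; if $t_n=1$ for at least one $n$, it is additionally required that $\max_\alpha\mathrm{dist}(x,C_\alpha)$ is attained for every $x\in H$. *)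

(* Defs.v *)
From HB Require Import structures.
From mathcomp Require Import all_boot all_order all_algebra.
From mathcomp Require Import all_classical all_reals all_analysis.
Set Implicit Arguments. Unset Strict Implicit. Unset Printing Implicit Defensive.
Import Order.TTheory GRing.Theory Num.Theory.
Import numFieldNormedType.Exports.
Local Open Scope classical_set_scope.
Local Open Scope ring_scope.

(* A real Hilbert space is a complete normed space over R whose norm is
   induced by an inner product [inner]. *)
Definition is_inner_product (R : realType) (H : normedModType R)
  (inner : H -> H -> R) : Prop :=
  [/\ forall x y, inner x y = inner y x,
      forall (a : R) x y z, inner (a *: x + y) z = a * inner x z + inner y z
    & forall x, inner x x = `|x| ^+ 2].

Definition convex_set_H (R : realType) (H : normedModType R) (A : set H) : Prop :=
  forall x y (l : R), A x -> A y -> 0 <= l <= 1 -> A (l *: x + (1 - l) *: y).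

Definition dist_set (R : realType) (H : normedModType R) (x : H) (A : set H) : R :=
  inf [set `|x - a| | a in A].

Definition is_metric_proj (R : realType) (H : normedModType R)
  (A : set H) (x p : H) : Prop :=
  A p /\ forall a, A a -> `|x - p| <= `|x - a|.

Definition sup_dist (R : realType) (H : normedModType R) (Omega : Type)
  (C : Omega -> set H) (x : H) : R :=
  sup (range (fun b => dist_set x (C b))).

Definition remote_projections (R : realType) (H : normedModType R)
  (Omega : Type) (C : Omega -> set H) (t : nat -> R) (x : nat -> H) : Prop :=
  ((exists n, t n = 1) ->
     forall y : H, exists a : Omega, forall b, dist_set y (C b) <= dist_set y (C a)) /\
  exists alpha : nat -> Omega, forall n,
    t n * sup_dist C (x n) <= dist_set (x n) (C (alpha n)) /\
    is_metric_proj (C (alpha n)) (x n) (x n.+1).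

Definition weak_cvg (R : realType) (H : normedModType R)
  (inner : H -> H -> R) (x : nat -> H) (p : H) : Prop :=
  forall y : H, (fun n => inner (x n) y) @ \oo --> inner p y.

(* Main.v *)
Require Import Defs.
From HB Require Import structures.
From mathcomp Require Import all_boot all_order all_algebra.
From mathcomp Require Import all_classical all_reals all_analysis.
From mathcomp Require Import ring lra zify.
Import Order.TTheory GRing.Theory Num.Theory.
Import numFieldNormedType.Exports.
Local Open Scope classical_set_scope.
Local Open Scope ring_scope.
Set Implicit Arguments. Unset Strict Implicit. Unset Printing Implicit Defensive.

Lemma nearooP (P : nat -> Prop) :
  (\forall n \near \oo, P n) <-> exists N, forall n, (N <= n)%N -> P n.
Proof.
split.
  by move=> [N _ hN]; exists N => n hn; apply: hN.
by move=> [N hN]; exists N => // n; apply: hN.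
Qed.

Lemma arch_inv {R : realType} (e : R) : 0 < e ->
  exists N, forall n, (N <= n)%N -> n.+1%:R^-1 < e.
Proof.
move=> e0; exists (Num.truncn e^-1) => n hn.
rewrite -ltf_pV2 ?(posrE, invr_gt0)// ?ltr0n// invrK.
apply: (lt_le_trans (truncnS_gt _)); rewrite ler_nat ltnS; exact: hn.
Qed.

Lemma min_exists (R : realType) (H : completeNormedModType R) (S : set H) (F : H -> R) :
  closed S -> S !=set0 ->
  (forall u v, S u -> S v -> S (2^-1 *: (u + v))) ->
  (forall c, 0 <= F c) ->
  (forall u v, S u -> S v ->
     F (2^-1 *: (u + v)) <= (F u + F v) / 2 - `|u - v| ^+ 2 / 4) ->
  (forall b, S b -> forall eta, 0 < eta -> exists2 delta, 0 < delta &
       forall c, S c -> `|b - c| < delta -> F b <= F c + eta) ->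
  exists2 b, S b & forall c, S c -> F b <= F c.
Proof.
move=> cS [s0 Ss0] Smid F0 Fmid Flsc.
set m := inf (F @` S).
have hinf : has_inf (F @` S).
  split; first by exists (F s0), s0.
  by exists 0 => _ [c _ <-].
have mle c : S c -> m <= F c by move=> Sc; apply: (ge_inf hinf.2); exists c.
have hc j : exists c, S c /\ F c < m + j.+1%:R^-1.
  have jp : 0 < j.+1%:R^-1 :> R by rewrite invr_gt0 ltr0n.
  have [_ [c Sc <-] hlt] := inf_adherent jp hinf.
  by exists c.
have [cs hcs] := choice hc.
have dst j k : `|cs j - cs k| ^+ 2 <= 2 * (F (cs j) - m) + 2 * (F (cs k) - m).
  have := Fmid _ _ (hcs j).1 (hcs k).1.
  have := mle _ (Smid _ _ (hcs j).1 (hcs k).1).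
  lra.
have cvgc : cvg (cs @ \oo).
  apply: cauchy_cvg; apply: cauchy_exP => e e0.
  have e20 : 0 < e ^+ 2 / 4 by rewrite divr_gt0 ?exprn_gt0.
  have [N hN] := arch_inv e20.
  exists (cs N); apply/nearooP; exists N => n hn.
  rewrite -ball_normE /ball_ /=.
  have h1 := (hcs N).2; have h2 := (hcs n).2.
  have h3 := hN N (leqnn N); have h4 := hN n hn; have h5 := dst N n.
  have h6 : `|cs N - cs n| ^+ 2 < e ^+ 2.
  set A := `|cs N - cs n| ^+ 2 in h5 *. set a := N.+1%:R^-1 in h1 h3. set a2 := n.+1%:R^-1 in h2 h4. set E := e ^+ 2 in h3 h4 *. set FN := F (cs N) in h1 h5. set Fn := F (cs n) in h2 h5. lra.
  have h7 := normr_ge0 (cs N - cs n).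
  rewrite !expr2 in h6; nra.
have Sb : S (lim (cs @ \oo)).
  apply: (closed_cvg S cS _ _ cvgc).
  by apply/nearooP; exists 0%N => n _; exact: (hcs n).1.
exists (lim (cs @ \oo)) => // c Sc.
suff : F (lim (cs @ \oo)) <= m by move/le_trans; apply; apply: mle.
apply/ler_addgt0Pr => e e0.
have e2 : 0 < e / 2 by rewrite divr_gt0.
have [d d0 hd] := Flsc _ Sb (e / 2) e2.
have := cvgc; move/cvgrPdist_lt => /(_ d d0) /nearooP [N1 hN1].
have [N2 hN2] := arch_inv e2.
have h1 := hd (cs (maxn N1 N2)) (hcs _).1 (hN1 _ (leq_maxl N1 N2)).
have h2 := (hcs (maxn N1 N2)).2.
have h3 := hN2 _ (leq_maxr N1 N2).
set a := (maxn N1 N2).+1%:R^-1 in h2 h3. set Fn := F (cs (maxn N1 N2)) in h1 h2. lra.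
Qed.

Definition ev (P : nat -> Prop) := exists N, forall n, (N <= n)%N -> P n.

Lemma ev_and P Q : ev P -> ev Q -> ev (fun n => P n /\ Q n).
Proof.
move=> [N1 h1] [N2 h2]; exists (maxn N1 N2) => n hn; split.
  by apply: h1; apply: leq_trans hn; apply: leq_maxl.
by apply: h2; apply: leq_trans hn; apply: leq_maxr.
Qed.

Lemma ev_imp (P Q : nat -> Prop) : (forall n, P n -> Q n) -> ev P -> ev Q.
Proof. by move=> h [N hN]; exists N => n /hN /h. Qed.

Lemma evT (P : nat -> Prop) : (forall n, P n) -> ev P.
Proof. by move=> h; exists 0%N. Qed.

Definition bdd {R : realType} (f : nat -> R) :=
  (forall k, 0 <= f k) /\ exists B, forall k, f k <= B.

Definition LS {R : realType} (f : nat -> R) : R :=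
  inf [set b | ev (fun k => f k <= b)].

Section LSth.
Context {R : realType}.
Implicit Types f g h : nat -> R.

Lemma LS_hasinf f : bdd f -> has_inf [set b | ev (fun k => f k <= b)].
Proof.
move=> [f0 [B hB]]; split; first by exists B; apply: evT.
exists 0 => b [N hN]; exact: le_trans (f0 N) (hN N (leqnn N)).
Qed.

Lemma LS_le f b : bdd f -> ev (fun k => f k <= b) -> LS f <= b.
Proof. by move=> /LS_hasinf hi hb; apply: (ge_inf hi.2). Qed.

Lemma LS_ev f e : bdd f -> 0 < e -> ev (fun k => f k <= LS f + e).
Proof.
move=> /LS_hasinf hi e0; have [b hb hlt] := inf_adherent e0 hi.
by apply: ev_imp hb => n /le_trans; apply; apply: ltW.
Qed.

Lemma LS_ge0 f : bdd f -> 0 <= LS f.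
Proof.
move=> bf; have hi := LS_hasinf bf; apply: lb_le_inf; first exact: hi.1.
move=> b [N hN]; exact: le_trans (bf.1 N) (hN N (leqnn N)).
Qed.

Lemma LS_lin f g h (a b c : R) : bdd f -> bdd g -> bdd h -> 0 <= a -> 0 <= b ->
  ev (fun k => f k <= a * g k + b * h k + c) -> LS f <= a * LS g + b * LS h + c.
Proof.
move=> bf bg bh a0 b0 hev; apply/ler_addgt0Pr => e e0.
set q := e / (a + b + 1).
have q0 : 0 < q by rewrite divr_gt0 //; lra.
have hq : q * (a + b + 1) = e by rewrite divfK //; apply/eqP => hh; lra.
apply: LS_le => //.
apply: ev_imp (ev_and hev (ev_and (LS_ev bg q0) (LS_ev bh q0))).
move=> n [h1 [h2 h3]].
set G := g n in h1 h2; set Hh := h n in h1 h3; set F := f n in h1 *.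
set lg := LS g in h2 *; set lh := LS h in h3 *.
have : a * G <= a * (lg + q) by rewrite ler_wpM2l.
have : b * Hh <= b * (lh + q) by rewrite ler_wpM2l.
nra.
Qed.

Lemma LS_sub_le f (psi : nat -> nat) : bdd f -> (forall k, (k <= psi k)%N) ->
  LS (f \o psi) <= LS f.
Proof.
move=> bf hpsi.
have bfp : bdd (f \o psi).
  by case: bf => f0 [B hB]; split => [k|]; [exact: f0|exists B => k; exact: hB].
apply/ler_addgt0Pr => e e0; apply: LS_le => //.
have [N hN] := LS_ev bf e0; exists N => n hn /=; apply: hN.
exact: leq_trans hn (hpsi n).
Qed.

Lemma noninc_le f : (forall n, f n.+1 <= f n) -> forall m n, (m <= n)%N -> f n <= f m.
Proof.
move=> hf m n /subnK <-; elim: (n - m)%N => [|k ih]; first by rewrite add0n.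
by rewrite addSn; apply: le_trans (hf _) ih.
Qed.

Lemma LS_sub_ge f (psi : nat -> nat) : bdd f -> (forall k, (k <= psi k)%N) ->
  (forall n, f n.+1 <= f n) -> LS f <= LS (f \o psi).
Proof.
move=> bf hpsi hf.
have bfp : bdd (f \o psi).
  by case: bf => f0 [B hB]; split => [k|]; [exact: f0|exists B => k; exact: hB].
apply/ler_addgt0Pr => e e0; apply: LS_le => //.
have [N hN] := LS_ev bfp e0; exists (psi N) => n hn.
apply: le_trans (hN N (leqnn N)); exact: noninc_le.
Qed.

Lemma LS_le_each f n : bdd f -> (forall n, f n.+1 <= f n) -> LS f <= f n.
Proof. by move=> bf hf; apply: LS_le => //; exists n => m; apply: noninc_le. Qed.

End LSth.
Section Hilb.
Context (R : realType) (H : completeNormedModType R) (inner : H -> H -> R)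
  (hi : is_inner_product inner).

Lemma ipC x y : inner x y = inner y x.
Proof. by case: hi. Qed.
Lemma ipZDl a x y z : inner (a *: x + y) z = a * inner x z + inner y z.
Proof. by case: hi. Qed.
Lemma ipxx x : inner x x = `|x| ^+ 2.
Proof. by case: hi. Qed.
Lemma ipDl x y z : inner (x + y) z = inner x z + inner y z.
Proof. by rewrite -{1}(scale1r x) ipZDl mul1r. Qed.
Lemma ip0l z : inner 0 z = 0.
Proof. have h := ipDl 0 0 z; rewrite addr0 in h; lra. Qed.
Lemma ipZl a x z : inner (a *: x) z = a * inner x z.
Proof. by have h := ipZDl a x 0 z; rewrite addr0 ip0l addr0 in h. Qed.
Lemma ipNl x z : inner (- x) z = - inner x z.
Proof. by rewrite -scaleN1r ipZl mulN1r. Qed.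
Lemma ipBl x y z : inner (x - y) z = inner x z - inner y z.
Proof. by rewrite ipDl ipNl. Qed.
Lemma ipDr x y z : inner z (x + y) = inner z x + inner z y.
Proof. by rewrite ipC ipDl !(ipC z). Qed.
Lemma ipZr a x z : inner z (a *: x) = a * inner z x.
Proof. by rewrite ipC ipZl ipC. Qed.
Lemma ipNr x z : inner z (- x) = - inner z x.
Proof. by rewrite ipC ipNl ipC. Qed.
Lemma ipBr x y z : inner z (x - y) = inner z x - inner z y.
Proof. by rewrite ipDr ipNr. Qed.
Lemma nDsq u v : `|u + v| ^+ 2 = `|u| ^+ 2 + 2 * inner u v + `|v| ^+ 2.
Proof. by rewrite -!ipxx ipDl !ipDr (ipC v u); ring. Qed.
Lemma nBsq u v : `|u - v| ^+ 2 = `|u| ^+ 2 - 2 * inner u v + `|v| ^+ 2.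
Proof. by rewrite nDsq ipNr normrN; ring. Qed.
Lemma ip_young e d (mu : R) : 0 < mu -> 2 * inner e d <= mu * `|d| ^+ 2 + `|e| ^+ 2 / mu.
Proof.
move=> mu0; have h := nBsq (mu *: d) e.
have : 0 <= `|mu *: d - e| ^+ 2 by rewrite sqr_ge0.
rewrite h normrZ (gtr0_norm mu0) ipZl (ipC d e) => h2.
have hE : `|e| ^+ 2 / mu * mu = `|e| ^+ 2 by rewrite divfK ?gt_eqF.
move: hE h2; set E := `|e| ^+ 2 / mu; move=> hE h2.
rewrite expr2 in h2 *; rewrite !expr2 in hE *.
nra.
Qed.

Lemma nBsqZ (u v : H) (s : R) : 0 <= s ->
  `|u - s *: v| ^+ 2 = `|u| ^+ 2 - 2 * s * inner u v + s ^+ 2 * `|v| ^+ 2.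
Proof. by move=> s0; rewrite nBsq ipZr normrZ (ger0_norm s0) exprMn; ring. Qed.

Lemma mid_sq (b u v : H) : `|b - 2^-1 *: (u + v)| ^+ 2 =
  (`|b - u| ^+ 2 + `|b - v| ^+ 2) / 2 - `|u - v| ^+ 2 / 4.
Proof.
rewrite nBsq normrZ ger0_norm ?invr_ge0 ?ler0n // exprMn nDsq ipZr ipDr !nBsq.
by rewrite (ipC u v); field.
Qed.

Lemma sq_mono (a b : R) : 0 <= a -> 0 <= b -> a <= b -> a ^+ 2 <= b ^+ 2.
Proof. by move=> a0 b0 ab; rewrite !expr2; nra. Qed.

Lemma proj_var (A : set H) x p : convex_set_H A -> is_metric_proj A x p ->
  forall c, A c -> inner (x - p) (c - p) <= 0.
Proof.
move=> cA [Ap hp] c Ac.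
rewrite leNgt; apply/negP => X0.
have D0 : 0 <= `|c - p| ^+ 2 by rewrite exprn_ge0.
set D := `|c - p| ^+ 2 in D0.
set X := inner (x - p) (c - p) in X0.
set l := X / (D + X).
have l0 : 0 < l by rewrite divr_gt0 //; lra.
have hl : l * (D + X) = X by rewrite divfK //; apply/eqP => hh; lra.
have l1 : l <= 1 by nra.
clearbody l.
have Aq := cA c p l Ac Ap (ltac:(by rewrite (ltW l0) l1)).
have h := sq_mono (normr_ge0 _) (normr_ge0 _) (hp _ Aq).
have key : `|x - (l *: c + (1 - l) *: p)| ^+ 2 = `|x - p| ^+ 2 - 2 * l * X + l ^+ 2 * D.
  rewrite /X /D !nBsq nDsq !normrZ (ger0_norm (ltW l0)) ger0_norm; last by lra.
  rewrite !(ipDr, ipDl, ipNr, ipNl, ipZr, ipZl) ?(ipC p x) ?(ipC p c) ?(ipC c x).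
  rewrite ipxx. ring.
rewrite key in h.
have : 2 * X <= l * D.
  have : l * (2 * X) <= l * (l * D) by rewrite !expr2 in h; nra.
  by rewrite ler_pM2l.
nra.
Qed.

Lemma sq_cont (A B d : R) : 0 <= A -> 0 <= B -> A <= B + d -> B <= A + d ->
  0 <= d -> d <= 1 -> A ^+ 2 <= B ^+ 2 + d * (2 * A + 3).
Proof. move=> *; rewrite !expr2; nra. Qed.

Lemma delta_for (A e : R) : 0 <= A -> 0 < e ->
  exists d, [/\ 0 < d, d <= 1 & d * (2 * A + 3) <= e].
Proof.
move=> A0 e0; exists (e / (2 * A + 3 + e)).
have hp : 0 < 2 * A + 3 + e by lra.
have hq : e / (2 * A + 3 + e) * (2 * A + 3 + e) = e by rewrite divfK // gt_eqF.
have d0 : 0 < e / (2 * A + 3 + e) by rewrite divr_gt0.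
move: hq d0; set d := e / _ => hq d0; split => //; nra.
Qed.

Lemma sq_le_inv (a b : R) : 0 <= a -> 0 <= b -> a ^+ 2 <= b ^+ 2 -> a <= b.
Proof. move=> a0 b0; rewrite !expr2 => h; nra. Qed.

Lemma fejer (A : set H) x p c : convex_set_H A -> is_metric_proj A x p -> A c ->
  `|p - c| ^+ 2 <= `|x - c| ^+ 2 - `|x - p| ^+ 2.
Proof.
move=> cA hp Ac; have v := proj_var cA hp Ac.
move: v; rewrite !nBsq !(ipDr, ipDl, ipNr, ipNl) ?(ipC p x) ?(ipC p c) ?(ipC c x) ipxx.
lra.
Qed.

Lemma mid_in (A : set H) u v : convex_set_H A -> A u -> A v -> A (2^-1 *: (u + v)).
Proof.
move=> cA Au Av; have := cA u v 2^-1 Au Av.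
have -> : 1 - 2^-1 = 2^-1 :> R by field.
rewrite scalerDr; apply; rewrite invr_ge0 ler0n /= invf_le1 ?ler1n //.
Qed.

Lemma proj_exists (A : set H) b : closed A -> convex_set_H A -> A !=set0 ->
  exists p, is_metric_proj A b p.
Proof.
move=> clA cA nA.
have lsc : forall q, A q -> forall e, 0 < e -> exists2 d, 0 < d &
    forall c, A c -> `|q - c| < d -> `|b - q| ^+ 2 <= `|b - c| ^+ 2 + e.
  move=> q Aq e e0.
  have [d [d0 d1 hd]] := delta_for (normr_ge0 (b - q)) e0.
  exists d => // c Ac hc.
  have t1 : `|b - q| <= `|b - c| + d.
    apply: le_trans (ler_distD c b q) _; rewrite lerD2l distrC; exact: ltW.
  have t2 : `|b - c| <= `|b - q| + d.
    apply: le_trans (ler_distD q b c) _; rewrite lerD2l; exact: ltW.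
  have := sq_cont (normr_ge0 _) (normr_ge0 _) t1 t2 (ltW d0) d1.
  lra.
have hmid : forall u v, A u -> A v -> `|b - 2^-1 *: (u + v)| ^+ 2 <=
    (`|b - u| ^+ 2 + `|b - v| ^+ 2) / 2 - `|u - v| ^+ 2 / 4.
  by move=> u v _ _; rewrite mid_sq.
have [p Ap hp] := @min_exists R H A (fun c => `|b - c| ^+ 2) clA nA
  (fun u v => mid_in cA) (fun c => exprn_ge0 _ (normr_ge0 _)) hmid lsc.
exists p; split => // a Aa; apply: sq_le_inv => //; exact: hp.
Qed.

Lemma dist_hasinf (A : set H) x : A !=set0 -> has_inf [set `|x - a| | a in A].
Proof.
move=> [a Aa]; split; first by exists `|x - a|, a.
by exists 0 => _ [c _ <-].
Qed.

Lemma dist_le (A : set H) x a : A a -> dist_set x A <= `|x - a|.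
Proof.
move=> Aa; apply: (ge_inf (dist_hasinf x (ex_intro _ a Aa)).2); by exists a.
Qed.

Lemma dist_ge0 (A : set H) x : A !=set0 -> 0 <= dist_set x A.
Proof.
move=> nA; apply: lb_le_inf; first exact: (dist_hasinf x nA).1.
by move=> _ [c _ <-].
Qed.

Lemma dist_adh (A : set H) x e : A !=set0 -> 0 < e ->
  exists2 a, A a & `|x - a| < dist_set x A + e.
Proof.
move=> nA e0; have [_ [a Aa <-] h] := inf_adherent e0 (dist_hasinf x nA).
by exists a.
Qed.

Lemma dist_lip (A : set H) x y : A !=set0 -> dist_set x A <= `|x - y| + dist_set y A.
Proof.
move=> nA; apply/ler_addgt0Pr => e e0.
have [a Aa ha] := dist_adh y nA e0.
apply: le_trans (dist_le x Aa) _.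
have := ler_distD y x a; lra.
Qed.

End Hilb.

Definition G {R : realType} {H : normedModType R} (w : nat -> H) (c : H) : R :=
  LS (fun k => `|w k - c| ^+ 2).

Lemma bddG {R : realType} {H : normedModType R} (w : nat -> H) M c :
  (forall k, `|w k| <= M) -> bdd (fun k => `|w k - c| ^+ 2).
Proof.
move=> hM; split => [k|]; first exact: exprn_ge0.
exists ((M + `|c|) ^+ 2) => k; apply: sq_mono => //.
  apply: addr_ge0 => //; exact: le_trans (normr_ge0 _) (hM 0%N).
apply: le_trans (ler_normB _ _) _; rewrite lerD2r; exact: hM.
Qed.

Section Main.
Context (R : realType) (H : completeNormedModType R) (inner : H -> H -> R)
  (hi : is_inner_product inner) (Omega : Type) (C : Omega -> set H)
  (hC : forall a, closed (C a) /\ convex_set_H (C a)) (z : H)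
  (hz : forall a, C a z).

Lemma center (w : nat -> H) M : (forall k, `|w k| <= M) ->
  (forall a e, 0 < e -> ev (fun k => exists2 c, C a c & `|w k - c| ^+ 2 <= e)) ->
  exists2 b, (forall a, C a b) & forall c, G w b <= G w c.
Proof.
move=> hM hd.
have M0 : 0 <= M by exact: le_trans (normr_ge0 _) (hM 0%N).
have bd c := bddG c hM.
have Gmid : forall u v, setT u -> setT v ->
    G w (2^-1 *: (u + v)) <= (G w u + G w v) / 2 - `|u - v| ^+ 2 / 4.
  move=> u v _ _.
  have h : ev (fun k => `|w k - 2^-1 *: (u + v)| ^+ 2 <=
      2^-1 * `|w k - u| ^+ 2 + 2^-1 * `|w k - v| ^+ 2 + - (`|u - v| ^+ 2 / 4)).
    by apply: evT => k; rewrite (mid_sq hi); lra.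
  have i2 : 0 <= 2^-1 :> R by rewrite invr_ge0.
  have := LS_lin (bd _) (bd u) (bd v) i2 i2 h.
  rewrite /G; lra.
have Glsc : forall b, setT b -> forall eta, 0 < eta -> exists2 delta, 0 < delta &
    forall c, setT c -> `|b - c| < delta -> G w b <= G w c + eta.
  move=> b _ e e0.
  have [d [d0 d1 hd']] := delta_for (addr_ge0 M0 (normr_ge0 b)) e0.
  exists d => // c _ hc.
  have := @LS_lin R _ _ _ 1 0 e (bd b) (bd c) (bd c) ler01 (lexx 0).
  rewrite /G mul1r mul0r addr0; apply; apply: evT => k.
  have t1 : `|w k - b| <= `|w k - c| + d.
    apply: le_trans (ler_distD c _ _) _; rewrite lerD2l distrC; exact: ltW.
  have t2 : `|w k - c| <= `|w k - b| + d.
    apply: le_trans (ler_distD b _ _) _; rewrite lerD2l; exact: ltW.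
  have := sq_cont (normr_ge0 _) (normr_ge0 _) t1 t2 (ltW d0) d1.
  have : `|w k - b| <= M + `|b|.
    apply: le_trans (ler_normB _ _) _; rewrite lerD2r; exact: hM.
  rewrite mul0r addr0 mul1r.
  set A := `|w k - b|; set B := `|w k - c|; move=> hA hsq.
  have : d * (2 * A + 3) <= d * (2 * (M + `|b|) + 3).
    by rewrite ler_pM2l //; lra.
  lra.
have [b _ hb] := @min_exists R H setT (G w) closedT (ex_intro _ z I)
  (fun _ _ _ _ => I) (fun c => LS_ge0 (bd c)) Gmid Glsc.
exists b; last by move=> c; exact: hb.
move=> a.
have [p hp] := proj_exists hi b (hC a).1 (hC a).2 (ex_intro _ z (hz a)).
have var := proj_var hi (hC a).2 hp.
suff : `|b - p| ^+ 2 <= 0.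
  move=> h; have : `|b - p| <= 0.
    by have := normr_ge0 (b - p); rewrite expr2 in h; nra.
  rewrite normr_le0 subr_eq0 => /eqP ->; exact: hp.1.
apply/ler_addgt0Pr => e e0.
have e4 : 0 < e / 4 by rewrite divr_gt0.
have := @LS_lin R _ _ _ 1 0 (- (`|b - p| ^+ 2 / 2) + e / 2) (bd p) (bd b) (bd b)
  ler01 (lexx 0).
rewrite /G mul1r mul0r addr0 => h.
have hev : ev (fun k => `|w k - p| ^+ 2 <= 1 * `|w k - b| ^+ 2 + 0 * `|w k - b| ^+ 2
    + (- (`|b - p| ^+ 2 / 2) + e / 2)).
  apply: ev_imp (hd a _ e4) => k [c Cc hc].
  have v := var c Cc.
  have i2 : 0 < 2^-1 :> R by rewrite invr_gt0.
  have y := ip_young hi (w k - c) (b - p) i2.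
  rewrite invrK in y.
  have e1 : `|w k - b| ^+ 2 = `|w k - p| ^+ 2 - 2 * inner (w k - p) (b - p) + `|b - p| ^+ 2.
    by rewrite -(nBsq hi); congr (`|_| ^+ 2); rewrite opprB addrA subrK.
  have e2 : inner (w k - p) (b - p) = inner (w k - c) (b - p) + inner (c - p) (b - p).
    by rewrite -(ipDl hi); congr inner; rewrite addrA subrK.
  rewrite (ipC hi (c - p)) in e2.
  lra.
have := h hev; have := hb p I; lra.
Qed.

Lemma small_rho (e : R) : 0 < e -> exists2 r, 0 < r & 4 * r ^+ 2 <= e.
Proof.
move=> e0; exists (e / (4 + 4 * e)).
  by rewrite divr_gt0 //; lra.
have hq : e / (4 + 4 * e) * (4 + 4 * e) = e by rewrite divfK // gt_eqF //; lra.
have d0 : 0 < e / (4 + 4 * e) by rewrite divr_gt0 //; lra.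
move: hq d0; set d := e / _ => hq d0; rewrite expr2; nra.
Qed.

Variables (x : nat -> H) (alpha : nat -> Omega)
  (hproj : forall n, is_metric_proj (C (alpha n)) (x n) (x n.+1)).

Lemma fej c : (forall a, C a c) -> forall n,
  `|x n.+1 - c| ^+ 2 <= `|x n - c| ^+ 2 - `|x n - x n.+1| ^+ 2.
Proof. by move=> hc n; apply: (fejer hi (hC _).2 (hproj n) (hc _)). Qed.

Lemma fej_noninc c : (forall a, C a c) -> forall n,
  `|x n.+1 - c| ^+ 2 <= `|x n - c| ^+ 2.
Proof. move=> hc n; have := fej hc n; have := exprn_ge0 2 (normr_ge0 (x n - x n.+1)); lra. Qed.

Definition Mx := `|x 0%N - z| + `|z|.

Lemma xbound n : `|x n| <= Mx.
Proof.
have h : `|x n - z| <= `|x 0%N - z|.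
  elim: n => [//|n ih]; apply: le_trans ih; apply: sq_le_inv => //.
  exact: fej_noninc.
have t : `|x n| <= `|x n - z| + `|z|.
  by rewrite -{1}(subrK z (x n)); apply: ler_normD.
rewrite /Mx; lra.
Qed.

Lemma steps e : 0 < e -> ev (fun n => `|x n - x n.+1| <= e).
Proof.
move=> e0.
have bs := bddG z xbound.
have hni := fej_noninc hz.
have e20 : 0 < e ^+ 2 by rewrite exprn_gt0.
apply: ev_imp (LS_ev bs e20) => n hn.
have h1 := LS_le_each n.+1 bs hni.
have h2 := fej hz n.
apply: sq_le_inv => //; lra.
Qed.

Lemma dist_sup m b : dist_set (x m) (C b) <= sup_dist C (x m).
Proof.
apply: (sup_upper_bound _); last by exists b.
split; first by exists (dist_set (x m) (C b)), b.
by exists `|x m - z| => _ [c _ <-]; apply: dist_le (hz c).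
Qed.

Lemma chain N (eta : R) : (forall n, (N <= n)%N -> `|x n - x n.+1| <= eta) ->
  forall n k, (N <= n)%N -> `|x n - x (n + k)%N| <= k%:R * eta.
Proof.
move=> hN n k hn; elim: k => [|k ih]; first by rewrite addn0 subrr normr0 mul0r.
apply: le_trans (ler_distD (x (n + k)%N) _ _) _.
rewrite addnS -natr1 mulrDl mul1r; apply: lerD => //.
by apply: hN; apply: leq_trans hn (leq_addr _ _).
Qed.

Variables (t : nat -> R) (ht : forall n, t n * sup_dist C (x n) <= dist_set (x n) (C (alpha n))).

Lemma distto0 (delta : R) (K : nat) : 0 < delta ->
  (forall n, exists k, (k <= K)%N /\ delta < t (n + k)%N) ->
  forall b e, 0 < e -> ev (fun n => dist_set (x n) (C b) <= e).
Proof.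
move=> d0 hK b e e0.
set eta := e * delta / (K%:R * delta + 1).
have hK0 : 0 < K%:R * delta + 1 by have := ler0n R K; nra.
have heta : eta * (K%:R * delta + 1) = e * delta by rewrite divfK // gt_eqF.
have eta0 : 0 < eta by rewrite divr_gt0 // mulr_gt0.
have [N hN] := steps eta0.
exists N => n hn.
have [k [kK hk]] := hK n.
set m := (n + k)%N in hk.
have h1 := chain hN k hn.
have h2 : delta * dist_set (x m) (C b) <= `|x m - x m.+1|.
  apply: (le_trans _ (dist_le (x m) (hproj m).1)).
  apply: (le_trans _ (ht m)).
  have := dist_sup m b; have := dist_ge0 (x m) (ex_intro _ z (hz b)).
  set D := dist_set _ _; set S := sup_dist _ _; nra.
have h3 : `|x m - x m.+1| <= eta by apply: hN; apply: leq_trans hn (leq_addr _ _).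
have h4 := dist_lip (x n) (x m) (ex_intro _ z (hz b)).
have h5 : k%:R <= K%:R :> R by rewrite ler_nat.
move: h1 h2 h4; rewrite -/m; set D := dist_set (x m) _; set Dn := dist_set (x n) _.
set L := `|x n - x m|; move=> h1 h2 h4.
have h6 : k%:R * eta <= K%:R * eta by rewrite ler_pM2r.
suff : delta * Dn <= delta * e by rewrite ler_pM2l.
nra.
Qed.


Lemma wk_hyp (psi : nat -> nat) (hpsi : forall k, (k <= psi k)%N) (delta : R) (K : nat) :
  0 < delta -> (forall n, exists k, (k <= K)%N /\ delta < t (n + k)%N) ->
  forall a e, 0 < e -> ev (fun k => exists2 c, C a c & `|x (psi k) - c| ^+ 2 <= e).
Proof.
move=> d0 hK a e e0.
have [r r0 hr] := small_rho e0.
have [N hN] := distto0 d0 hK a r0.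
exists N => k hk.
have hd := hN (psi k) (leq_trans hk (hpsi k)).
have [c Cc hc] := dist_adh (x (psi k)) (ex_intro _ z (hz a)) r0.
exists c => //.
have : `|x (psi k) - c| <= 2 * r by lra.
move=> h; have h2 : 0 <= 2 * r by lra.
have := sq_mono (normr_ge0 _) h2 h.
rewrite exprMn; lra.
Qed.

Lemma main_weak (delta : R) (K : nat) : 0 < delta ->
  (forall n, exists k, (k <= K)%N /\ delta < t (n + k)%N) ->
  exists a, (forall b, C b a) /\
    forall y e, 0 < e -> ev (fun n => inner (x n - a) y <= e).
Proof.
move=> d0 hK.
have [a Ca ha] := @center x Mx xbound (@wk_hyp (fun k => k) (fun k => leqnn k) _ _ d0 hK).
exists a; split => // y e e0.
case: (pselect (ev (fun n => inner (x n - a) y <= e))) => // nev; exfalso.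
have hf : forall N, exists n, (N <= n)%N /\ e < inner (x n - a) y.
  move=> N; case: (pselect (exists n, (N <= n)%N /\ e < inner (x n - a) y)) => // hn.
  exfalso; apply: nev; exists N => n hn'; rewrite leNgt; apply/negP => h.
  by apply: hn; exists n.
have [psi hpsi] := choice hf.
have hpsi1 : forall k, (k <= psi k)%N by move=> k; exact: (hpsi k).1.
have wb : forall k, `|(x \o psi) k| <= Mx by move=> k; exact: xbound.
have [b Cb hb] := @center (x \o psi) Mx wb (@wk_hyp psi hpsi1 _ _ d0 hK).
have h1 : G x b <= G (x \o psi) b.
  exact: (LS_sub_ge (f := fun n => `|x n - b| ^+ 2) (bddG b xbound) hpsi1 (fej_noninc Cb)).
have h2 := ha b.
have h5 : G (x \o psi) a <= G x a.
  exact: (LS_sub_le (f := fun n => `|x n - a| ^+ 2) (bddG a xbound) hpsi1).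
have y0 : 0 <= `|y| ^+ 2 by rewrite exprn_ge0.
set s := e / (`|y| ^+ 2 + 1).
have s0 : 0 < s by rewrite divr_gt0 //; lra.
have hs : s * (`|y| ^+ 2 + 1) = e by rewrite divfK // gt_eqF //; lra.
have h3 := hb (a + s *: y).
have h4 : G (x \o psi) (a + s *: y) <= 1 * G (x \o psi) a + 0 * G (x \o psi) a
    + (- 2 * s * e + s ^+ 2 * `|y| ^+ 2).
  apply: LS_lin; [exact: bddG wb|exact: bddG wb|exact: bddG wb|exact: ler01|exact: lexx|].
  apply: evT => k /=.
  have -> : x (psi k) - (a + s *: y) = (x (psi k) - a) - s *: y by rewrite opprD addrA.
  rewrite (nBsqZ hi _ _ (ltW s0)).
  have hk := (hpsi k).2.
  have : s * e <= s * inner (x (psi k) - a) y by rewrite ler_pM2l // ltW.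
  lra.
move: h1 h2 h3 h4 h5.
set A := G x a; set B := G x b; set Bw := G _ b; set Aw := G _ a; set Sw := G _ (a + _).
move=> h1 h2 h3 h4 h5.
clearbody s; move: hs y0 s0; set Y := `|y| ^+ 2 => hs y0 s0.
rewrite mulrDr mulr1 in hs.
have hY : s * Y = e - s by lra.
have e4 : s ^+ 2 * `|y| ^+ 2 = s * e - s * s.
  by rewrite -/Y expr2 -mulrA hY; ring.
rewrite e4 in h4.
have : 0 < s * e by rewrite mulr_gt0.
have : 0 < s * s by rewrite mulr_gt0.
lra.
Qed.

End Main.

Unset Implicit Arguments.

Theorem theorem2 (R : realType) (H : completeNormedModType R)
  (inner : H -> H -> R) (Omega : Type) (C : Omega -> set H) (t : nat -> R) :
  is_inner_product inner ->
  (exists a b : Omega, a <> b) ->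
  (forall a, closed (C a) /\ convex_set_H (C a)) ->
  (exists z : H, forall a, C a z) ->
  (forall n, 0 <= t n <= 1) ->
  (exists (delta : R) (K : nat), 0 < delta /\
     forall n, exists k, (k <= K)%N /\ delta < t (n + k)%N) ->
  forall x : nat -> H, remote_projections C t x ->
  exists p : H, (forall a, C a p) /\ weak_cvg inner x p.
Proof.
move=> hi _ hC [z hz] _ [delta [K [d0 hK]]] x [_ [alpha halpha]].
have hproj n := (halpha n).2.
have ht n := (halpha n).1.
have [a [Ca hw]] := main_weak hi hC hz hproj ht d0 hK.
exists a; split => // y.
apply/cvgrPdist_le => e e0; apply/nearooP.
have [N1 h1] := hw y e e0; have [N2 h2] := hw (- y) e e0.
exists (maxn N1 N2) => n hn.
have g1 := h1 n (leq_trans (leq_maxl _ _) hn).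
have g2 := h2 n (leq_trans (leq_maxr _ _) hn).
rewrite (ipNr hi) (ipBl hi) in g2; rewrite (ipBl hi) in g1.
rewrite ler_norml; apply/andP; split; lra.
Qed.
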